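(* Let $n\ge 2$ and consider $n+1$ qubits labelled $1,\dots,n+1$. Qubit $1$ holds an arbitrary single-qubit pure state $|\psi\rangle$ to be teleported, and qubits $2,\dots,n+1$ hold an $n$-qubit state $\rho$ (the channel), so the initial state is $\rho'=|\psi\rangle\langle\psi|\otimes\rho$. Qubit $S=2$ is the sender's qubit, qubit $R=n+1$ is the receiver's qubit, and the qubits in $X=\{3,\dots,n\}$ may be held by the sender and/or any number of controllers. Consider a teleportation protocol of the following form: a (possibly non-local) unitary $V$ acting on qubits $[n]=\{1,\dots,n\}$ is applied; then the qubits in $X$ are measured in the basis $\{U^\dagger|t\rangle\}_t$ for some unitary $U$ on the qubits of $X$ ($t$ ranging over computational-basis outcomes of $X$); qubits $1$ and $2$ undergo a Bell measurement; and finally a classically conditioned unitary $W$, depending on all measurement outcomes, is applied to qubit $R$, producing the receiver state $\rho_T$. Define $\rho_X$ as the reduced state of $V\rho' V^\dagger$ on the qubits of $X$, $p_t(U)=\langle t|U\rho_X U^\dagger|t\rangle$, and for $p_t(U)>0$ the conditional two-qubit state of $S$ and $R$ $$\rho_{SR}^t=\frac{\mathrm{Tr}_X\!\left\{\left(U^\dagger|t\rangle\langle t|U\right)_X\,\mathrm{Tr}_1\!\left\{V\rho'V^\dagger\right\}\left(U^\dagger|t\rangle\langle t|U\right)_X\right\}}{p_t(U)}.$$ Define the localizable concurrence $\mathcal{C}_L(\rho)=\max_U\sum_t p_t(U)\,\mathcal{C}(\rho_{SR}^t)$ and the teleportation fidelity $F_T(\rho)=\max_U\sum_t p_t(U)\,F(\rho_{SR}^t)$.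 Then $$\max\left\{\frac{3+\mathcal{C}_L(\rho)}{6},\ \frac{1+2\mathcal{C}_L(\rho)}{3}\right\}\le F_T(\rho)\le\frac{2+\mathcal{C}_L(\rho)}{3}.$$
   Context: $\mathcal{C}(\sigma)$ denotes the Wootters concurrence of a two-qubit state $\sigma$. $F(\sigma)$ denotes the (optimal, average over input states) fidelity of teleporting one qubit using the two-qubit state $\sigma$ as the shared resource in the standard protocol (Bell measurement by the sender, two classical bits, local correction by the receiver); it is a known fact that for every two-qubit state $\sigma$, $\max\{\frac{3+\mathcal{C}(\sigma)}{6},\frac{1+2\mathcal{C}(\sigma)}{3}\}\le F(\sigma)\le \frac{2+\mathcal{C}(\sigma)}{3}$. Subscripts on operators indicate the qubits they act on; $\mathrm{Tr}_1$ is the partial trace over qubit $1$ and $\mathrm{Tr}_X$ the partial trace over the qubits in $X$. *)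

(* Defs.v *)
From mathcomp Require Import all_boot all_order all_algebra.
From mathcomp Require Import complex.
From mathcomp Require Import classical_sets reals.
Set Implicit Arguments.
Unset Strict Implicit.
Unset Printing Implicit Defensive.
Import Order.TTheory GRing.Theory Num.Theory.
Local Open Scope ring_scope.

Section Quantum.
Variable R : realType.
Local Notation C := R[i].

(* Linear operators on the Hilbert space with orthonormal (computational)
   basis indexed by a finite type T, written as their matrix entries. *)
Definition op (T : finType) := T -> T -> C.
Definition ket (T : finType) := T -> C.

Definition mulop (T : finType) (A B : op T) : op T :=
  fun i j => \sum_(k : T) A i k * B k j.
Definition adjop (T : finType) (A : op T) : op T := fun i j => (A j i)^*.
Definition idop (T : finType) : op T := fun i j => (i == j)%:R.
Definition trop (T : finType) (A : op T) : C := \sum_(i : T) A i i.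

Definition unitary (T : finType) (U : op T) : Prop :=
  mulop (adjop U) U = @idop T /\ mulop U (adjop U) = @idop T.

Definition is_state (T : finType) (A : op T) : Prop :=
  (forall i j, A i j = (A j i)^*) /\
  (forall v : ket T, 0 <= \sum_(i : T) \sum_(j : T) (v i)^* * A i j * v j) /\
  trop A = 1.

Definition normalized (T : finType) (v : ket T) : Prop :=
  \sum_(i : T) (v i)^* * v i = 1.

(* qubit basis: false = |0>, true = |1> *)
Definition pauliY : op bool := fun i j =>
  match i, j with
  | false, true => Complex 0 (-1)
  | true, false => Complex 0 1
  | _, _ => 0
  end.

Definition tens2 (A B : op bool) : op ((bool * bool)%type) :=
  fun '(i1, i2) '(j1, j2) => A i1 j1 * B i2 j2.

Definition opmx (T : finType) (A : op T) : 'M[C]_#|T| :=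
  \matrix_(i, j) A (enum_val i) (enum_val j).

Definition spectrum (T : finType) (A : op T) : seq C :=
  sval (closed_field_poly_normal (char_poly (opmx A))).

Definition spin_flip (s : op ((bool * bool)%type)) : op ((bool * bool)%type) :=
  let YY := tens2 pauliY pauliY in
  mulop YY (mulop (fun i j => (s i j)^*) YY).

(* Wootters concurrence: max(0, l1 - l2 - l3 - l4), the l_i being the square
   roots of the eigenvalues of sigma sigma~ (which are real and nonnegative
   for a state), in decreasing order. *)
Definition concurrence (s : op ((bool * bool)%type)) : R :=
  let ls := sort (fun a b : R => b <= a)
              [seq Num.sqrt (complex.Re z) | z <- spectrum (mulop s (spin_flip s))] in
  Num.max 0 (ls`_0 - ls`_1 - ls`_2 - ls`_3).

Definition phiplus : ket ((bool * bool)%type) :=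
  fun '(a, b) => if a == b then Complex (Num.sqrt 2)^-1 0 else 0.

(* fully entangled fraction: max over maximally entangled states
   (W (x) 1)|Phi+>, W a single-qubit unitary, of <e|sigma|e> *)
Definition ent_fraction (s : op ((bool * bool)%type)) : R :=
  sup [set y : R | exists W : op bool, unitary W /\
        y = complex.Re (\sum_(i : (bool * bool)%type) \sum_(j : (bool * bool)%type)
              (\sum_(k : (bool * bool)%type) tens2 W (@idop bool) i k * phiplus k)^* * s i j
              * (\sum_(k : (bool * bool)%type) tens2 W (@idop bool) j k * phiplus k))].

(* optimal average fidelity of the standard teleportation protocol
   (Bell measurement, 2 cbits, local unitary correction) with resource sigma,
   by the Horodecki formula F = (2 f + 1)/3, f the fully entangled fraction *)
Definition tele_fidelity (s : op ((bool * bool)%type)) : R :=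
  (2 * ent_fraction s + 1) / 3.

(* Basis of the qubits of X = {3,...,n} (m = n - 2 qubits; qubit 3+k <-> k). *)
Definition Xb (m : nat) := {ffun 'I_m -> bool}.

Section Protocol.
Variable m : nat.
(* psi: state of qubit 1; rho: channel on qubits (S = 2, X, R = n+1);
   V: unitary on qubits (1, S, X) = [n]; U: unitary on X *)
Variables (psi : ket bool) (rho : op ((bool * Xb m * bool)%type))
          (V : op ((bool * bool * Xb m)%type)).

(* full state rho' = |psi><psi| (x) rho, basis ordered (1, S, X, R) *)
Definition rho_full : op ((bool * bool * Xb m * bool)%type) :=
  fun '(a, s, x, r) '(b, s', x', r') =>
    psi a * (psi b)^* * rho (s, x, r) (s', x', r').

Definition V_full : op ((bool * bool * Xb m * bool)%type) :=
  fun '(a, s, x, r) '(b, s', x', r') =>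
    V (a, s, x) (b, s', x') * (r == r')%:R.

Definition evolved : op ((bool * bool * Xb m * bool)%type) :=
  mulop V_full (mulop rho_full (adjop V_full)).

Definition tr1_evolved : op ((bool * Xb m * bool)%type) :=
  fun '(s, x, r) '(s', x', r') => \sum_(a : bool) evolved (a, s, x, r) (a, s', x', r').

Definition rho_X : op (Xb m) :=
  fun x x' => \sum_(a : bool) \sum_(s : bool) \sum_(r : bool)
                evolved (a, s, x, r) (a, s, x', r).

Variable U : op (Xb m).

Definition projU (t : Xb m) : op (Xb m) := fun x x' => (U t x)^* * U t x'.

Definition prob (t : Xb m) : R :=
  complex.Re (mulop U (mulop rho_X (adjop U)) t t).

(* conditional state of S and R (the zero operator when p_t(U) = 0, where it
   only occurs multiplied by p_t(U) = 0) *)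
Definition cond_state (t : Xb m) : op ((bool * bool)%type) :=
  fun '(s, r) '(s', r') =>
    (\sum_(x : Xb m) \sum_(y : Xb m) \sum_(y' : Xb m)
        projU t x y * tr1_evolved (s, y, r) (s', y', r') * projU t y' x)
    / Complex (prob t) 0.

End Protocol.

Definition loc_concurrence m psi rho V : R :=
  sup [set y : R | exists U : op (Xb m), unitary U /\
        y = \sum_(t : Xb m) prob psi rho V U t * concurrence (cond_state psi rho V U t)].

Definition tele_fidelity_T m psi rho V : R :=
  sup [set y : R | exists U : op (Xb m), unitary U /\
        y = \sum_(t : Xb m) prob psi rho V U t * tele_fidelity (cond_state psi rho V U t)].

End Quantum.

(* Main.v *)
Require Import Defs.
From mathcomp Require Import all_boot all_order all_algebra.
From mathcomp Require Import complex.
From mathcomp Require Import classical_sets reals.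
From mathcomp Require Import ring lra.
From mathcomp Require boolp.
Import Order.TTheory GRing.Theory Num.Theory.
Set Implicit Arguments.
Unset Strict Implicit.
Local Open Scope ring_scope.

Section Gen.
Variable R : realType.
Local Notation C := R[i].

Definition qf (T : finType) (A : op R T) (v : ket R T) : C :=
  \sum_(i : T) \sum_(j : T) (v i)^* * A i j * v j.
Definition psd (T : finType) (A : op R T) := forall v, 0 <= qf A v.
Definition herm (T : finType) (A : op R T) := forall i j, A i j = (A j i)^*.

Lemma sum_pair (A B : finType) (F : A * B -> C) :
  \sum_(p : A * B) F p = \sum_(a : A) \sum_(b : B) F (a, b).
Proof. by rewrite pair_bigA; apply: eq_bigr => -[]. Qed.

Lemma sum_delta (T : finType) (i : T) (F : T -> C) :
  \sum_(k : T) (k == i)%:R * F k = F i.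
Proof.
rewrite (bigD1 i) //= eqxx mul1r big1 ?addr0 // => k /negbTE ->; by rewrite mul0r.
Qed.

Lemma sum_deltar (T : finType) (i : T) (F : T -> C) :
  \sum_(k : T) F k * (k == i)%:R = F i.
Proof. by rewrite -[RHS](sum_delta i); apply: eq_bigr => k _; rewrite mulrC. Qed.

Lemma sum4_swap (I J K L : finType) (F : I -> J -> K -> L -> C) :
  \sum_(i : I) \sum_(j : J) \sum_(k : K) \sum_(l : L) F i j k l
  = \sum_(k : K) \sum_(l : L) \sum_(i : I) \sum_(j : J) F i j k l.
Proof.
under eq_bigr => i _ do rewrite exchange_big.
rewrite exchange_big; apply: eq_bigr => k _.
under eq_bigr => i _ do rewrite exchange_big.
by rewrite exchange_big.
Qed.

Lemma qf_ext (T : finType) (A B : op R T) :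
  (forall i j, A i j = B i j) -> forall v, qf A v = qf B v.
Proof. by move=> e v; apply: eq_bigr => i _; apply: eq_bigr => j _; rewrite e. Qed.

Lemma psd_ext (T : finType) (A B : op R T) :
  (forall i j, A i j = B i j) -> psd A -> psd B.
Proof. by move=> e P v; rewrite -(qf_ext e). Qed.

Lemma herm_ext (T : finType) (A B : op R T) :
  (forall i j, A i j = B i j) -> herm A -> herm B.
Proof. by move=> e H i j; rewrite -!e. Qed.

Lemma psd_conj (T T' : finType) (A : op R T) (K : T' -> T -> C) :
  psd A -> psd (fun i j => \sum_(k : T) \sum_(l : T) K i k * A k l * (K j l)^*).
Proof.
move=> P v.
have -> : qf (fun i j => \sum_(k : T) \sum_(l : T) K i k * A k l * (K j l)^*) v
   = qf A (fun l => \sum_(j : T') (K j l)^* * v j).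
  rewrite /qf.
  transitivity (\sum_(i : T') \sum_(j : T') \sum_(k : T) \sum_(l : T)
      (v i)^* * K i k * A k l * (K j l)^* * v j).
    apply: eq_bigr => i _; apply: eq_bigr => j _.
    rewrite mulr_sumr mulr_suml; apply: eq_bigr => k _.
    rewrite mulr_sumr mulr_suml; apply: eq_bigr => l _.
    by rewrite !mulrA.
  transitivity (\sum_(k : T) \sum_(l : T) \sum_(i : T') \sum_(j : T')
      (v i)^* * K i k * A k l * (K j l)^* * v j).
    exact: sum4_swap.
  apply: eq_bigr => k _; apply: eq_bigr => l _.
  rewrite rmorph_sum !mulr_suml; apply: eq_bigr => i _.
  rewrite mulr_sumr; apply: eq_bigr => j _.
  by rewrite rmorphM /= conjCK; ring.
exact: P.
Qed.

Lemma herm_conj (T T' : finType) (A : op R T) (K : T' -> T -> C) :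
  herm A -> herm (fun i j => \sum_(k : T) \sum_(l : T) K i k * A k l * (K j l)^*).
Proof.
move=> H i j; rewrite rmorph_sum exchange_big; apply: eq_bigr => k _.
rewrite rmorph_sum; apply: eq_bigr => l _.
by rewrite !rmorphM /= conjCK -H; ring.
Qed.

Lemma psd_sum (I T : finType) (A : I -> op R T) :
  (forall a, psd (A a)) -> psd (fun i j => \sum_(a : I) A a i j).
Proof.
move=> P v.
have -> : qf (fun i j => \sum_(a : I) A a i j) v = \sum_(a : I) qf (A a) v.
  rewrite /qf [RHS]exchange_big; apply: eq_bigr => i _.
  rewrite [RHS]exchange_big; apply: eq_bigr => j _.
  by rewrite mulr_sumr mulr_suml.
by apply: sumr_ge0 => a _; apply: P.
Qed.

Lemma herm_sum (I T : finType) (A : I -> op R T) :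
  (forall a, herm (A a)) -> herm (fun i j => \sum_(a : I) A a i j).
Proof. by move=> H i j; rewrite rmorph_sum; apply: eq_bigr => a _; rewrite H. Qed.

Lemma psd_scale (T : finType) (A : op R T) (c : C) :
  0 <= c -> psd A -> psd (fun i j => A i j * c).
Proof.
move=> c0 P v.
have -> : qf (fun i j => A i j * c) v = qf A v * c.
  rewrite /qf mulr_suml; apply: eq_bigr => i _.
  rewrite mulr_suml; apply: eq_bigr => j _; ring.
by apply: mulr_ge0.
Qed.

Lemma herm_scale (T : finType) (A : op R T) (c : C) :
  c^* = c -> herm A -> herm (fun i j => A i j * c).
Proof. by move=> cc H i j; rewrite rmorphM /= cc -H. Qed.

Lemma psd_diag (T : finType) (A : op R T) i : psd A -> 0 <= A i i.
Proof.
move=> P; have := P (fun k => (k == i)%:R); rewrite /qf.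
rewrite (bigD1 i) /=; last by [].
rewrite [X in _ + X]big1 => [|k nk]; last first.
  by rewrite big1 // => l _; rewrite (negbTE nk) rmorph0 !mul0r.
rewrite addr0 (bigD1 i) /=; last by [].
rewrite [X in _ + X]big1 => [|l nl]; last by rewrite (negbTE nl) mulr0.
by rewrite addr0 eqxx rmorph1 mul1r mulr1.
Qed.

Lemma sum_delta2 (T : finType) (i : T) (F : T -> C) :
  \sum_(k : T) (i == k)%:R * F k = F i.
Proof. by rewrite -[RHS](sum_delta i); apply: eq_bigr => k _; rewrite eq_sym. Qed.

Lemma conj_lin (T T' Y : finType) (A : op R T) (f : T' -> Y -> T) (c : T' -> Y -> C) i j :
  \sum_(k : T) \sum_(l : T) (\sum_(y : Y) c i y * (k == f i y)%:R) * A k l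
       * (\sum_(y : Y) c j y * (l == f j y)%:R)^*
  = \sum_(y : Y) \sum_(y' : Y) c i y * A (f i y) (f j y') * (c j y')^*.
Proof.
transitivity (\sum_(k : T) \sum_(l : T) \sum_(y : Y) \sum_(y' : Y)
   (k == f i y)%:R * ((l == f j y')%:R * (c i y * A k l * (c j y')^* ))).
  apply: eq_bigr => k _; apply: eq_bigr => l _.
  rewrite rmorph_sum !mulr_suml; apply: eq_bigr => y _.
  rewrite mulr_sumr; apply: eq_bigr => y' _.
  by rewrite rmorphM /= rmorph_nat; ring.
rewrite sum4_swap; apply: eq_bigr => y _; apply: eq_bigr => y' _.
rewrite (eq_bigr (fun k => (k == f i y)%:R * (c i y * A k (f j y') * (c j y')^* ))).
  by rewrite sum_delta.
by move=> k _; rewrite -mulr_sumr sum_delta.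
Qed.

Lemma psd_lin (T T' Y : finType) (A : op R T) (f : T' -> Y -> T) (c : T' -> Y -> C) :
  psd A -> psd (fun i j => \sum_(y : Y) \sum_(y' : Y) c i y * A (f i y) (f j y') * (c j y')^*).
Proof.
move=> P; apply: (psd_ext _ (psd_conj (fun i k => \sum_(y : Y) c i y * (k == f i y)%:R) P)).
by move=> i j; rewrite conj_lin.
Qed.

Lemma herm_lin (T T' Y : finType) (A : op R T) (f : T' -> Y -> T) (c : T' -> Y -> C) :
  herm A -> herm (fun i j => \sum_(y : Y) \sum_(y' : Y) c i y * A (f i y) (f j y') * (c j y')^*).
Proof.
move=> P; apply: (herm_ext _ (herm_conj (fun i k => \sum_(y : Y) c i y * (k == f i y)%:R) P)).
by move=> i j; rewrite conj_lin.
Qed.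

Lemma sum_unit (F : unit -> C) : \sum_(u : unit) F u = F tt.
Proof. by rewrite (big_pred1 tt) // => -[]. Qed.

Lemma psd_sel (T T' : finType) (A : op R T) (f : T' -> T) :
  psd A -> psd (fun i j => A (f i) (f j)).
Proof.
move=> P; apply: (psd_ext _ (psd_lin (fun i (_ : unit) => f i) (fun _ _ => 1) P)).
by move=> i j; rewrite !sum_unit rmorph1 mulr1 mul1r.
Qed.

Lemma herm_sel (T T' : finType) (A : op R T) (f : T' -> T) :
  herm A -> herm (fun i j => A (f i) (f j)).
Proof. by move=> H i j; rewrite H. Qed.

Lemma sum_two (T : finType) (i j : T) (a b : C) (F : T -> C) :
  \sum_(k : T) ((k == i)%:R * a + (k == j)%:R * b) * F k = a * F i + b * F j.
Proof.
rewrite (eq_bigr (fun k => (k == i)%:R * (a * F k) + (k == j)%:R * (b * F k))).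
  by rewrite big_split /= !sum_delta.
by move=> k _; ring.
Qed.

Lemma qf_two (T : finType) (A : op R T) (i j : T) (a b : C) :
  qf A (fun k => (k == i)%:R * a + (k == j)%:R * b) =
  a^* * A i i * a + a^* * A i j * b + b^* * A j i * a + b^* * A j j * b.
Proof.
rewrite /qf.
rewrite (eq_bigr (fun k => ((k == i)%:R * a^* + (k == j)%:R * b^*) *
   \sum_(l : T) ((l == i)%:R * a + (l == j)%:R * b) * A k l)); last first.
  move=> k _; rewrite mulr_sumr; apply: eq_bigr => l _.
  by rewrite rmorphD !rmorphM /= !rmorph_nat; ring.
rewrite sum_two !sum_two; ring.
Qed.

Lemma qf_bound (T : finType) (A : op R T) (e : ket R T) : psd A ->
  (forall i, A i i <= 1) ->
  qf A e *+ 2 <= (\sum_(i : T) (e i)^* * e i) *+ (#|T| * 2).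
Proof.
move=> P A1.
have pr : forall i j, (e i)^* * A i j * e j + (e j)^* * A j i * e i <=
    (e i)^* * e i * A i i + (e j)^* * e j * A j j.
  move=> i j; rewrite -subr_ge0.
  have := P (fun k => (k == i)%:R * e i + (k == j)%:R * (- e j)).
  rewrite qf_two rmorphN /= => H; apply: (le_trans H).
  by rewrite le_eqVlt; apply/orP; left; apply/eqP; ring.
have -> : qf A e *+ 2 = \sum_(i : T) \sum_(j : T)
    ((e i)^* * A i j * e j + (e j)^* * A j i * e i).
  rewrite mulr2n {2}/qf exchange_big /qf -big_split /=.
  by apply: eq_bigr => i _; rewrite -big_split.
apply: (le_trans (ler_sum _ (fun i _ => ler_sum _ (fun j _ => pr i j)))).
have dle : forall i, (e i)^* * e i * A i i <= (e i)^* * e i.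
  move=> i; apply: ler_piMr => //; rewrite mulrC; exact: mul_conjC_ge0.
apply: (le_trans (ler_sum _ (fun i _ => ler_sum _ (fun j _ => lerD (dle i) (dle j))))).
rewrite (eq_bigr (fun i => ((e i)^* * e i) *+ #|T| + \sum_(j : T) (e j)^* * e j)); last first.
  by move=> i _; rewrite big_split /= sumr_const.
by rewrite big_split /= sumrMnl sumr_const -mulrnDr addnn -muln2.
Qed.

Lemma diag_le1 (T : finType) (A : op R T) i : psd A -> trop A = 1 -> A i i <= 1.
Proof.
move=> P t1; rewrite -t1 /trop (bigD1 i) //= lerDl.
by apply: sumr_ge0 => k _; apply: psd_diag.
Qed.

End Gen.

Section EF.
Variable R : realType.
Local Notation C := R[i].

Definition hh : C := Complex (Num.sqrt 2)^-1 0.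

Lemma e_eq (W : op R bool) a b :
  \sum_(k : (bool * bool)%type) tens2 W (@idop R bool) (a, b) k * phiplus R k = W a b * hh.
Proof.
rewrite sum_pair /=.
rewrite (eq_bigr (fun c => (c == b)%:R * (W a c * hh))).
  by rewrite sum_delta.
move=> c _.
rewrite (eq_bigr (fun d => (d == b)%:R * (W a c * phiplus R (c, d)))); last first.
  by move=> d _; rewrite /idop eq_sym /phiplus /=; ring.
rewrite sum_delta /phiplus.
by case: eqP => _; rewrite ?mul1r ?mul0r ?mulr0.
Qed.

Lemma e_norm (W : op R bool) : unitary W ->
  \sum_(i : (bool * bool)%type)
     (\sum_(k : (bool * bool)%type) tens2 W (@idop R bool) i k * phiplus R k)^*
   * (\sum_(k : (bool * bool)%type) tens2 W (@idop R bool) i k * phiplus R k) = 1.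
Proof.
move=> uW.
rewrite sum_pair.
under eq_bigr => a _ do under eq_bigr => b _ do rewrite e_eq.
transitivity (hh^* * hh * \sum_(b : bool) \sum_(a : bool) (W a b)^* * W a b).
  rewrite exchange_big mulr_sumr; apply: eq_bigr => b _.
  rewrite mulr_sumr; apply: eq_bigr => a _.
  by rewrite rmorphM /=; ring.
have H : forall b, \sum_(a : bool) (W a b)^* * W a b = 1.
  move=> b; have := congr1 (fun f => f b b) uW.1; rewrite /mulop /adjop /idop /= => ->.
  by rewrite eqxx.
under eq_bigr do rewrite H.
rewrite sumr_const card_bool.
have hr : hh = real_complex R (Num.sqrt 2)^-1 by [].
rewrite hr conj_Creal; last by rewrite complex_real.
rewrite -rmorphM.
have -> : (2 : C) = real_complex R 2 by rewrite rmorph_nat.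
rewrite -rmorphM -(rmorph1 (real_complex R)); congr (real_complex R _).
rewrite -expr2 exprVn sqr_sqrtr ?ler0n //.
by rewrite mulr2n -[_ + _]/(2%:R : R) mulVf // pnatr_eq0.
Qed.

Lemma ef_bound (s : op R ((bool * bool)%type)) : is_state s -> ent_fraction s <= 4.
Proof.
move=> [H [P t1]].
rewrite /ent_fraction.
set S := (X in sup X).
have ub : forall y, S y -> y <= 4.
  move=> y [W [uW ->]].
  set e := fun i => \sum_(k : (bool * bool)%type) tens2 W (@idop R bool) i k * phiplus R k.
  change (complex.Re (qf s e) <= 4).
  have := @qf_bound R _ s e P (fun i => diag_le1 i P t1).
  rewrite (e_norm uW) card_prod card_bool => hq.
  have q4 : qf s e <= 4.
    rewrite -(@ler_pM2r _ 2) ?ltr0n // -natrM mulr_natr; exact: hq.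
  move: q4; rewrite (_ : (4 : C) = real_complex R 4); last by rewrite rmorph_nat.
  by rewrite lecE => /andP[].
case: (boolp.pselect (S !=set0)%classic) => ne.
  by apply: ge_sup.
rewrite sup_out //; by case.
Qed.

End EF.

Section Proto.
Variables (R : realType) (m : nat) (psi : ket R bool)
  (rho : op R ((bool * Xb m * bool)%type)) (V : op R ((bool * bool * Xb m)%type)).
Hypotheses (npsi : normalized psi) (srho : is_state rho) (uV : unitary V).
Local Notation C := R[i].
Local Notation E := (evolved psi rho V).
Local Notation T := (tr1_evolved psi rho V).
Local Notation Idx := ((bool * bool * Xb m * bool)%type).

Lemma rho_psd : psd rho. Proof. exact: srho.2.1. Qed.
Lemma rho_herm : herm rho. Proof. exact: srho.1. Qed.

Definition fstrip (i : Idx) (_ : unit) : (bool * Xb m * bool)%type :=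
  let '(a, s, x, r) := i in (s, x, r).
Definition cpsi (i : Idx) (_ : unit) : C := let '(a, s, x, r) := i in psi a.

Lemma rho_full_eq i j : rho_full psi rho i j =
  \sum_(y : unit) \sum_(y' : unit) cpsi i y * rho (fstrip i y) (fstrip j y') * (cpsi j y')^*.
Proof.
case: i => [[[a s] x] r]; case: j => [[[b s'] x'] r'].
by rewrite !sum_unit /=; ring.
Qed.

Lemma rho_full_psd : psd (rho_full psi rho).
Proof.
apply: (psd_ext _ (psd_lin fstrip cpsi rho_psd)) => i j; by rewrite rho_full_eq.
Qed.

Lemma rho_full_herm : herm (rho_full psi rho).
Proof.
apply: (herm_ext _ (herm_lin fstrip cpsi rho_herm)) => i j; by rewrite rho_full_eq.
Qed.

Lemma evolved_eq i j : E i j =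
  \sum_(k : Idx) \sum_(l : Idx) V_full V i k * rho_full psi rho k l * (V_full V j l)^*.
Proof.
rewrite /evolved /mulop /adjop; apply: eq_bigr => k _.
by rewrite mulr_sumr; apply: eq_bigr => l _; rewrite mulrA.
Qed.

Lemma E_psd : psd E.
Proof.
apply: (psd_ext _ (psd_conj (V_full V) rho_full_psd)) => i j; by rewrite evolved_eq.
Qed.

Lemma E_herm : herm E.
Proof.
apply: (herm_ext _ (herm_conj (V_full V) rho_full_herm)) => i j; by rewrite evolved_eq.
Qed.

Definition ins (a : bool) (i : (bool * Xb m * bool)%type) : Idx :=
  let '(s, x, r) := i in (a, s, x, r).

Lemma T_eq i j : T i j = \sum_(a : bool) E (ins a i) (ins a j).
Proof. by case: i => [[s x] r]; case: j => [[s' x'] r']. Qed.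

Lemma T_psd : psd T.
Proof.
apply: (psd_ext _ (psd_sum (fun a => psd_sel (ins a) E_psd))) => i j.
by rewrite T_eq.
Qed.

Lemma T_herm : herm T.
Proof.
apply: (herm_ext _ (herm_sum (fun a => herm_sel (ins a) E_herm))) => i j.
by rewrite T_eq.
Qed.

Definition insx (y : Xb m) (i : (bool * bool)%type) (y0 : Xb m) : (bool * Xb m * bool)%type :=
  let '(s, r) := i in (s, y0, r).

Definition Nt (U : op R (Xb m)) (t : Xb m) : op R ((bool * bool)%type) :=
  fun i j => \sum_(y : Xb m) \sum_(y' : Xb m)
     U t y * T (insx y i y) (insx y' j y') * (U t y')^*.

Lemma Nt_psd U t : psd (Nt U t).
Proof.
exact: (psd_lin (fun i y => insx y i y) (fun _ y => U t y) T_psd).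
Qed.

Lemma Nt_herm U t : herm (Nt U t).
Proof.
exact: (herm_lin (fun i y => insx y i y) (fun _ y => U t y) T_herm).
Qed.

Lemma cond_eq U t i j : unitary U ->
  cond_state psi rho V U t i j = Nt U t i j / Complex (prob psi rho V U t) 0.
Proof.
move=> uU; case: i => s r; case: j => s' r'; rewrite /cond_state; congr (_ / _).
have W : \sum_(x : Xb m) (U t x)^* * U t x = 1.
  have := congr1 (fun f => f t t) uU.2; rewrite /mulop /adjop /idop /= => e.
  transitivity ((t == t)%:R : C); last by rewrite eqxx.
  by rewrite -e; apply: eq_bigr => x _; rewrite mulrC.
transitivity (\sum_(x : Xb m) ((U t x)^* * U t x) * \sum_(y : Xb m) \sum_(y' : Xb m)
    U t y * T (s, y, r) (s', y', r') * (U t y')^*).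
  apply: eq_bigr => x _; rewrite mulr_sumr; apply: eq_bigr => y _.
  rewrite mulr_sumr; apply: eq_bigr => y' _; rewrite /projU; ring.
by rewrite -mulr_suml W mul1r.
Qed.

Definition Qt U t := mulop U (mulop (rho_X psi rho V) (adjop U)) t t.

Lemma rhoX_eq y y' : rho_X psi rho V y y' =
  \sum_(s : bool) \sum_(r : bool) T (s, y, r) (s, y', r).
Proof.
rewrite /rho_X exchange_big; apply: eq_bigr => s _.
by rewrite exchange_big.
Qed.

Lemma trN U t : \sum_(i : (bool * bool)%type) Nt U t i i = Qt U t.
Proof.
rewrite sum_pair /Nt /= sum4_swap /Qt /mulop /adjop.
apply: eq_bigr => y _; rewrite mulr_sumr; apply: eq_bigr => y' _.
rewrite rhoX_eq mulr_suml mulr_sumr; apply: eq_bigr => s _.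
rewrite mulr_suml mulr_sumr; apply: eq_bigr => r _.
by rewrite mulrA.
Qed.

Lemma Qt_ge0 U t : 0 <= Qt U t.
Proof. by rewrite -trN; apply: sumr_ge0 => i _; apply: psd_diag; apply: Nt_psd. Qed.

Lemma Qt_real U t : Qt U t = Complex (prob psi rho V U t) 0.
Proof. by rewrite /prob -/(Qt U t) -[LHS](RRe_real (ger0_real (Qt_ge0 U t))). Qed.

Lemma prob_ge0 U t : 0 <= prob psi rho V U t.
Proof. by have := Qt_ge0 U t; rewrite Qt_real lecE /= => /andP[]. Qed.

Lemma cond_is_state U t : unitary U -> 0 < prob psi rho V U t ->
  is_state (cond_state psi rho V U t).
Proof.
move=> uU pp.
set p := prob psi rho V U t in pp *.
have cp : 0 < Complex p 0 by rewrite ltcE /= eqxx.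
have c0 : 0 <= (Complex p 0)^-1 by rewrite invr_ge0 ltW.
have cc : ((Complex p 0)^-1)^* = (Complex p 0)^-1 by rewrite conj_Creal // ger0_real.
split; last split.
- apply: (herm_ext _ (herm_scale cc (Nt_herm U t))) => i j.
  by rewrite cond_eq.
- apply: (psd_ext _ (psd_scale c0 (Nt_psd U t))) => i j.
  by rewrite cond_eq.
- rewrite /trop (eq_bigr (fun i => Nt U t i i * (Complex p 0)^-1)); last first.
    by move=> i _; rewrite cond_eq.
  by rewrite -mulr_suml trN Qt_real mulfV // gt_eqF.
Qed.

Lemma VV (l k : Idx) : \sum_(i : Idx) (V_full V i l)^* * V_full V i k = (l == k)%:R.
Proof.
have H : forall p q, \sum_(i : (bool * bool * Xb m)%type) (V i p)^* * V i q = (p == q)%:R.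
  move=> p q; have := congr1 (fun f => f p q) uV.1; rewrite /mulop /adjop /idop /= => <-.
  done.
case: l => [[[b1 b2] b3] lr]; case: k => [[[c1 c2] c3] kr].
have H2 := H (b1, b2, b3) (c1, c2, c3); rewrite !sum_pair in H2.
rewrite !sum_pair /=.
transitivity (\sum_(a : bool) \sum_(s : bool) \sum_(x : Xb m)
   (V (a, s, x) (b1, b2, b3))^* * V (a, s, x) (c1, c2, c3) * (lr == kr)%:R).
  apply: eq_bigr => a _; apply: eq_bigr => s _; apply: eq_bigr => x _.
  rewrite (eq_bigr (fun r => (r == lr)%:R * ((V (a, s, x) (b1, b2, b3))^* *
      V (a, s, x) (c1, c2, c3) * (r == kr)%:R))); first by rewrite sum_delta.
  by move=> r _; rewrite rmorphM /= rmorph_nat; ring.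
under eq_bigr => a _ do under eq_bigr => s _ do rewrite -mulr_suml.
under eq_bigr => a _ do rewrite -mulr_suml.
rewrite -mulr_suml H2.
by rewrite -natrM mulnb.
Qed.

Lemma tr_rho_full : trop (rho_full psi rho) = 1.
Proof.
have Ht := srho.2.2; rewrite /trop !sum_pair in Ht.
rewrite /trop !sum_pair /=.
transitivity (\sum_(a : bool) (psi a)^* * psi a * (\sum_(s : bool) \sum_(x : Xb m)
   \sum_(r : bool) rho (s, x, r) (s, x, r))).
  apply: eq_bigr => a _; rewrite mulr_sumr; apply: eq_bigr => s _.
  rewrite mulr_sumr; apply: eq_bigr => x _.
  rewrite mulr_sumr; apply: eq_bigr => r _; ring.
by rewrite Ht; under eq_bigr do rewrite mulr1; exact: npsi.
Qed.

Lemma trE : trop E = 1.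
Proof.
rewrite /trop (eq_bigr _ (fun i _ => evolved_eq i i)).
transitivity (\sum_(k : Idx) \sum_(l : Idx) rho_full psi rho k l *
    \sum_(i : Idx) (V_full V i l)^* * V_full V i k).
  rewrite exchange_big; apply: eq_bigr => k _.
  rewrite exchange_big; apply: eq_bigr => l _.
  rewrite mulr_sumr; apply: eq_bigr => i _; ring.
under eq_bigr => k _ do under eq_bigr => l _ do rewrite VV.
under eq_bigr => k _ do rewrite sum_deltar.
exact: tr_rho_full.
Qed.

Lemma tr_rhoX : trop (rho_X psi rho V) = 1.
Proof.
rewrite -trE /trop !sum_pair.
under eq_bigr => y _ do rewrite rhoX_eq.
rewrite /= exchange_big [RHS]exchange_big; apply: eq_bigr => s _.
under eq_bigr => y _ do rewrite exchange_big.
by rewrite exchange_big.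
Qed.

Lemma sumQ U : unitary U -> \sum_(t : Xb m) Qt U t = 1.
Proof.
move=> uU.
have H : forall y' y, \sum_(t : Xb m) (U t y')^* * U t y = (y' == y)%:R.
  by move=> y' y; have := congr1 (fun f => f y' y) uU.1; rewrite /mulop /adjop /idop /=.
transitivity (\sum_(y : Xb m) \sum_(y' : Xb m) rho_X psi rho V y y' *
   \sum_(t : Xb m) (U t y')^* * U t y).
  rewrite /Qt /mulop /adjop exchange_big; apply: eq_bigr => y _.
  under eq_bigr => t _ do rewrite mulr_sumr.
  rewrite exchange_big; apply: eq_bigr => y' _.
  rewrite mulr_sumr; apply: eq_bigr => t _; ring.
under eq_bigr => y _ do under eq_bigr => y' _ do rewrite H.
under eq_bigr => y _ do rewrite sum_deltar.
exact: tr_rhoX.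
Qed.

Lemma sum_prob U : unitary U -> \sum_(t : Xb m) prob psi rho V U t = 1.
Proof.
move=> uU; have := sumQ uU.
under eq_bigr => t _ do rewrite Qt_real.
have e2 : \sum_(t : Xb m) Complex (prob psi rho V U t) 0 =
   Complex (\sum_(t : Xb m) prob psi rho V U t) 0.
  by apply: esym; exact: (rmorph_sum (real_complex R)).
by rewrite e2 => -[].
Qed.

End Proto.

Lemma id_unitary (R : realType) (T : finType) : unitary (@idop R T).
Proof.
have e : mulop (adjop (@idop R T)) (@idop R T) = @idop R T.
  apply: boolp.funext => i; apply: boolp.funext => j.
  rewrite /mulop /adjop /idop.
  under eq_bigr => k _ do rewrite rmorph_nat.
  by rewrite sum_delta.
split => //.
apply: boolp.funext => i; apply: boolp.funext => j.
rewrite /mulop /adjop /idop.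
under eq_bigr => k _ do rewrite rmorph_nat.
by rewrite sum_delta2 eq_sym.
Qed.

Lemma sum_lin (R : realType) (I : finType) (p x : I -> R) (a b : R) :
  \sum_(t : I) p t = 1 ->
  \sum_(t : I) p t * (a + b * x t) = a + b * \sum_(t : I) p t * x t.
Proof.
move=> s1.
rewrite (eq_bigr (fun t => a * p t + b * (p t * x t))); last by move=> t _; ring.
by rewrite big_split /= -!mulr_sumr s1 mulr1.
Qed.

Lemma sup_step (R : realType) (X : Type) (P : X -> Prop) (c f : X -> R) (x0 : X) :
  P x0 -> (forall x, P x -> [/\ 2^-1 + 6^-1 * c x <= f x,
    3^-1 + (2/3) * c x <= f x, f x <= 2/3 + 3^-1 * c x & c x <= 4]) ->
  Num.max ((3 + sup [set y | exists x, P x /\ y = c x]%classic) / 6)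
          ((1 + 2 * sup [set y | exists x, P x /\ y = c x]%classic) / 3)
    <= sup [set y | exists x, P x /\ y = f x]%classic
  /\ sup [set y | exists x, P x /\ y = f x]%classic
      <= (2 + sup [set y | exists x, P x /\ y = c x]%classic) / 3.
Proof.
move=> Px0 cU.
set SC := [set y | exists x, P x /\ y = c x]%classic.
set SF := [set y | exists x, P x /\ y = f x]%classic.
have ne_C : (SC !=set0)%classic by exists (c x0), x0.
have ne_F : (SF !=set0)%classic by exists (f x0), x0.
have hsC : has_sup SC.
  split => //; exists 4 => y [U [uU ->]]; by case: (cU U uU).
have hsF : has_sup SF.
  split => //; exists 2 => y [U [uU ->]]; case: (cU U uU) => _ _ a b; lra.
have cle : forall U, P U -> c U <= sup SC.
  by move=> U uU; apply: (sup_upper_bound hsC); exists U.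
have fle : forall U, P U -> f U <= sup SF.
  by move=> U uU; apply: (sup_upper_bound hsF); exists U.
split.
- have h1 : sup SC <= 6 * sup SF - 3.
    apply: ge_sup => // y [U [uU ->]].
    have := fle U uU; case: (cU U uU) => a _ _ _; lra.
  have h2 : sup SC <= (3 * sup SF - 1) / 2.
    apply: ge_sup => // y [U [uU ->]].
    have := fle U uU; case: (cU U uU) => _ a _ _; lra.
  rewrite ge_max; apply/andP; split; lra.
- apply: ge_sup => // y [U [uU ->]].
  have := cle U uU; case: (cU U uU) => _ _ a _; lra.
Qed.

Unset Implicit Arguments.
Set Strict Implicit.

Theorem proposition1 (R : realType) (m : nat)
  (* the known fact, for every two-qubit state sigma *)
  (known : forall s : op R ((bool * bool)%type), is_state s ->
      Num.max ((3 + concurrence s) / 6) ((1 + 2 * concurrence s) / 3)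
        <= tele_fidelity s
      /\ tele_fidelity s <= (2 + concurrence s) / 3)
  (psi : ket R bool) (rho : op R ((bool * Xb m * bool)%type))
  (V : op R ((bool * bool * Xb m)%type)) :
  normalized psi -> is_state rho -> unitary V ->
  Num.max ((3 + loc_concurrence psi rho V) / 6)
          ((1 + 2 * loc_concurrence psi rho V) / 3)
    <= tele_fidelity_T psi rho V
  /\ tele_fidelity_T psi rho V <= (2 + loc_concurrence psi rho V) / 3.
Proof.
move=> npsi srho uV.
pose p U t := prob psi rho V U t.
pose cc U t := concurrence (cond_state psi rho V U t).
pose ff U t := tele_fidelity (cond_state psi rho V U t).
pose c U := \sum_(t : Xb m) p U t * cc U t.
pose f U := \sum_(t : Xb m) p U t * ff U t.
have kt : forall U t, unitary U ->
   [/\ p U t * (2^-1 + 6^-1 * cc U t) <= p U t * ff U t,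
       p U t * (3^-1 + (2/3) * cc U t) <= p U t * ff U t,
       p U t * ff U t <= p U t * (2/3 + 3^-1 * cc U t) &
       p U t * cc U t <= p U t * 4].
  move=> U t uU.
  have p0 : 0 <= p U t by apply: prob_ge0.
  have [pz|pnz] := eqVneq (p U t) 0.
    by rewrite pz !mul0r.
  have pp : 0 < p U t by rewrite lt_def pnz.
  have st := cond_is_state srho uU pp.
  have [k1 k2] := known _ st.
  have ef := ef_bound st.
  rewrite ge_max in k1; case/andP: k1 => k1a k1b.
  rewrite /tele_fidelity in k1a k1b k2 ef.
  rewrite /ff /cc /tele_fidelity.
  split; apply: ler_wpM2l => //; lra.
have cU : forall U, unitary U -> [/\ 2^-1 + 6^-1 * c U <= f U,
    3^-1 + (2/3) * c U <= f U, f U <= 2/3 + 3^-1 * c U & c U <= 4].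
  move=> U uU.
  have s1 : \sum_(t : Xb m) p U t = 1 by apply: (sum_prob npsi srho uV uU).
  split.
  - rewrite /c -sum_lin //; apply: ler_sum => t _; by case: (kt U t uU).
  - rewrite /c -sum_lin //; apply: ler_sum => t _; by case: (kt U t uU).
  - rewrite /c -sum_lin //; apply: ler_sum => t _; by case: (kt U t uU).
  - have -> : (4 : R) = \sum_(t : Xb m) p U t * 4 by rewrite -mulr_suml s1 mul1r.
    apply: ler_sum => t _; by case: (kt U t uU).
exact: (sup_step (id_unitary R (Xb m)) cU).
Qed.
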